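(* Let $M$ be a matroid with $\lambda(M)=\sigma(M)=k$ and $\rank(M)=r$, and let $C_1,\ldots,C_\ell$ be all the cocircuits of $M$ of size $k$. Then the crux $\chi(M)=M\setminus(C_1\cup\cdots\cup C_\ell)$ has rank $r-\ell$.
   Context: $\sigma(M)$ is the maximum number of pairwise disjoint bases of $M$; $\lambda(M)$ is the minimum size of a cocircuit (a minimal set meeting every base). The crux $\chi(M)$ of $M$ is the matroid obtained from $M$ by deleting all elements lying in some minimum-size cocircuit; if this removes all elements, $\chi(M)$ is the empty matroid (of rank $0$). *)

(* Defs.v *)
From mathcomp Require Import all_boot.
Set Implicit Arguments. Unset Strict Implicit. Unset Printing Implicit Defensive.

Section Matroid.
Variable T : finType.

Definition is_matroid (E : {set T}) (B : {set {set T}}) : Prop :=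
  [/\ (forall b, b \in B -> b \subset E),
      B != set0 &
      (forall b1 b2, b1 \in B -> b2 \in B -> forall x, x \in b1 :\: b2 ->
         exists2 y, y \in b2 :\: b1 & (b1 :\ x) :|: [set y] \in B)].

Definition indep (B : {set {set T}}) (I : {set T}) : bool :=
  [exists b in B, I \subset b].

(* rank of a matroid = size of a base (all bases have equal size) *)
Definition mrank (B : {set {set T}}) : nat := \max_(b in B) #|b|.

Definition delete (E : {set T}) (B : {set {set T}}) (X : {set T}) : {set {set T}} :=
  [set I | maxset (fun J : {set T} => indep B J && (J \subset E :\: X)) I].

Definition cocircuit (E : {set T}) (B : {set {set T}}) (C : {set T}) : bool :=
  minset (fun X : {set T} => (X \subset E) && [forall b in B, ~~ [disjoint X & b]]) C.

Definition lambda_eq (E : {set T}) (B : {set {set T}}) (k : nat) : Prop :=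
  (exists2 C, cocircuit E B C & #|C| = k) /\
  (forall C, cocircuit E B C -> k <= #|C|).

Definition disjoint_bases (B : {set {set T}}) (n : nat) (f : 'I_n -> {set T}) : Prop :=
  (forall i, f i \in B) /\ (forall i j, i != j -> [disjoint f i & f j]).

Definition sigma_eq (B : {set {set T}}) (k : nat) : Prop :=
  (exists f : 'I_k -> {set T}, disjoint_bases B f) /\
  (forall g : 'I_k.+1 -> {set T}, ~ disjoint_bases B g).

Definition min_cocircuits (E : {set T}) (B : {set {set T}}) (k : nat) : {set {set T}} :=
  [set C | cocircuit E B C & #|C| == k].

Definition crux_bases (E : {set T}) (B : {set {set T}}) (k : nat) : {set {set T}} :=
  delete E B (\bigcup_(C in min_cocircuits E B k) C).

End Matroid.

(* Main.v *)
Require Import Defs.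
From mathcomp Require Import all_boot zify.
Set Implicit Arguments. Unset Strict Implicit. Unset Printing Implicit Defensive.

Section Aux.
Variable T : finType.
Implicit Types (E X J b : {set T}) (B : {set {set T}}).

Lemma meetP (A b : {set T}) : ~~ [disjoint A & b] -> exists2 z, z \in A & z \in b.
Proof. by rewrite -setI_eq0 => /set0Pn [z]; rewrite inE => /andP [] ; exists z. Qed.

Lemma card_le_bases E B b1 b2 : is_matroid E B -> b1 \in B -> b2 \in B -> #|b1| <= #|b2|.
Proof.
case=> _ _ ex.
move: {2}#|b1 :\: b2| (leqnn #|b1 :\: b2|) => n; elim: n b1 => [|n IH] b1 Hn Hb1 Hb2.
  have: b1 :\: b2 = set0 by apply/eqP; rewrite -cards_eq0 -leqn0.
  by move/eqP; rewrite setD_eq0 => /subset_leq_card.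
case: (set_0Vmem (b1 :\: b2)) => [/eqP|[x Hx]].
  by rewrite setD_eq0 => /subset_leq_card.
have [y Hy Hb] := ex _ _ Hb1 Hb2 x Hx.
move: Hx Hy; rewrite !inE => /andP [xb2 xb1] /andP [yb1 yb2].
have <- : #|(b1 :\ x) :|: [set y]| = #|b1|.
  rewrite setUC cardsU1 !inE (negbTE yb1) andbF /= add1n.
  by rewrite [in RHS](cardsD1 x b1) xb1.
apply: IH => //.
have : ((b1 :\ x) :|: [set y]) :\: b2 \subset (b1 :\: b2) :\ x.
  apply/subsetP => z; rewrite !inE => /andP [zb2 /orP [/andP [-> ->]|/eqP zy]].
    by rewrite zb2.
  by rewrite zy yb2 in zb2.
move/subset_leq_card => H; apply: leq_trans H _.
have : #|b1 :\: b2| = #|(b1 :\: b2) :\ x|.+1.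
  by rewrite (cardsD1 x (b1 :\: b2)) !inE xb2 xb1.
by move=> E1; rewrite -ltnS -E1.
Qed.

Lemma between E B J b0 b : is_matroid E B -> b0 \in B -> J \subset b0 -> b \in B ->
  exists2 b', b' \in B & (J \subset b') && (b' \subset J :|: b).
Proof.
case=> _ _ ex.
move: {2}#|b0 :\: (J :|: b)| (leqnn #|b0 :\: (J :|: b)|) => n; elim: n b0 => [|n IH] b0 Hn Hb0 HJ Hb.
  have: b0 :\: (J :|: b) = set0 by apply/eqP; rewrite -cards_eq0 -leqn0.
  by move/eqP; rewrite setD_eq0 => H; exists b0 => //; rewrite HJ H.
case: (set_0Vmem (b0 :\: (J :|: b))) => [/eqP|[x Hx]].
  by rewrite setD_eq0 => H; exists b0 => //; rewrite HJ H.
have Hx' : x \in b0 :\: b by move: Hx; rewrite !inE negb_or => /andP [/andP [_ ->] ->].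
have [y Hy Hb'] := ex _ _ Hb0 Hb x Hx'.
move: Hx Hy; rewrite !inE negb_or => /andP [/andP [xJ xb] xb0] /andP [yb0 yb].
apply: (IH _ _ Hb') => //.
  have : ((b0 :\ x) :|: [set y]) :\: (J :|: b) \subset (b0 :\: (J :|: b)) :\ x.
    apply/subsetP => z; rewrite !inE !negb_or => /andP [/andP [zJ zb] /orP [/andP [-> ->]|/eqP zy]].
      by rewrite zJ zb.
    by rewrite zy yb in zb.
  move/subset_leq_card => H; apply: leq_trans H _.
  have : #|b0 :\: (J :|: b)| = #|(b0 :\: (J :|: b)) :\ x|.+1.
    by rewrite (cardsD1 x (b0 :\: (J :|: b))) !inE negb_or xJ xb xb0.
  by move=> E1; rewrite -ltnS -E1.
apply/subsetP => z zJ; rewrite !inE (subsetP HJ _ zJ) andbT.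
by apply/orP; left; apply/eqP => zx; rewrite -zx zJ in xJ.
Qed.

End Aux.

Section Aux2.
Variable T : finType.
Implicit Types (E X J b C : {set T}) (B : {set {set T}}).

Lemma single_meet B k (f : 'I_k -> {set T}) C : disjoint_bases B f -> #|C| = k ->
  (forall b, b \in B -> ~~[disjoint C & b]) ->
  forall i x y, x \in C :&: f i -> y \in C :&: f i -> x = y.
Proof.
case=> fB fdis Ck Cmeet i x y Hx Hy.
apply/eqP; apply/negP => /negP nxy.
pose g j := odflt x [pick z in C :&: f j].
have Hg j : g j \in C :&: f j.
  rewrite /g; case: pickP => [z Hz|H] //=.
  have [z zC zf] := meetP (Cmeet _ (fB j)).
  by move: (H z); rewrite inE zC zf.
pose h (o : option 'I_k) := if o is Some j then g j else (if g i == x then y else x).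
have hi : h None \in C :&: f i by rewrite /h; case: ifP.
have hn : h None != g i by rewrite /h; case: ifP => [/eqP -> |/negbT]; rewrite // eq_sym.
have gin j j' : g j = g j' -> j = j'.
  move=> E1; apply/eqP; apply/negP => /negP /fdis D.
  have := Hg j; rewrite inE => /andP [_ H1].
  have := Hg j'; rewrite inE -E1 => /andP [_ H2].
  by rewrite (disjointFr D H1) in H2.
have hinj : injective h.
  case=> [j|] [j'|] //= E1.
  - by rewrite (gin _ _ E1).
  - have ji : j = i.
      apply/eqP; apply/negP => /negP /fdis D.
      have := Hg j; rewrite inE => /andP [_ H1].
      move: hi; rewrite /h inE -E1 => /andP [_ H2].
      by rewrite (disjointFr D H1) in H2.
    by subst j; move: hn; rewrite /h -E1 eqxx.
  - have ji : j' = i.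
      apply/eqP; apply/negP => /negP /fdis D.
      have := Hg j'; rewrite inE => /andP [_ H1].
      move: hi; rewrite /h inE E1 => /andP [_ H2].
      by rewrite (disjointFr D H1) in H2.
    by subst j'; move: hn; rewrite /h E1 eqxx.
have : #|h @: [set: option 'I_k]| <= #|C|.
  apply: subset_leq_card; apply/subsetP => z /imsetP [o _ ->].
  case: o => [j|] /=; first by have := Hg j; rewrite inE => /andP [].
  by move: hi; rewrite inE => /andP [].
by rewrite card_imset // cardsT card_option card_ord Ck ltnn.
Qed.

End Aux2.

Section Aux3.
Variable T : finType.
Implicit Types (E X J C : {set T}) (B : {set {set T}}).

Lemma eq_card_bases E B b1 b2 : is_matroid E B -> b1 \in B -> b2 \in B -> #|b1| = #|b2|.
Proof. by move=> M H1 H2; apply/eqP; rewrite eqn_leq !(card_le_bases M). Qed.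

Lemma in1 C (B1 : {set T}) (b z : T) : C :&: B1 = [set b] -> z \in C -> z \in B1 -> z = b.
Proof. move=> H zC zB; have: z \in C :&: B1 by rewrite inE zC zB.
by rewrite H inE => /eqP. Qed.

Lemma coc_sub E B (B1 : {set T}) C C' (b : T) : is_matroid E B -> B1 \in B ->
  cocircuit E B C -> cocircuit E B C' ->
  C :&: B1 = [set b] -> C' :&: B1 = [set b] -> C \subset C'.
Proof.
move=> M HB1 /minsetP [/andP [CE Cm] Cmin] /minsetP [/andP [C'E C'm] _] HC HC'.
have bC' : b \in C'.
  have: b \in C' :&: B1 by rewrite HC' inE.
  by rewrite inE => /andP [].
apply/subsetP => e eC.
case: (eqVneq e b) => [-> // | neb].
have : ~~ [forall b0 in B, ~~ [disjoint C :\ e & b0]].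
  apply/negP => H.
  have : C :\ e = C by apply: Cmin; [rewrite H andbT; apply: subset_trans CE; apply: subsetDl | apply: subsetDl].
  by move/setP/(_ e); rewrite !inE eqxx eC.
rewrite negb_forall_in => /exists_inP [b2 Hb2 /negbNE D].
have zb2 z : z \in C -> z \in b2 -> z = e.
  move=> zC zb; apply/eqP/negPn/negP => nze.
  have : z \in C :\ e by rewrite !inE zC nze.
  by move/(disjointFr D); rewrite zb.
have eB1 : e \notin B1 by apply/negP => eB; rewrite (in1 HC eC eB) eqxx in neb.
have [b' Hb' /andP [Jb' b'J]] := between M HB1 (subsetDl B1 [set b]) Hb2.
have notJ C0 z : C0 :&: B1 = [set b] -> z \in C0 -> z \in B1 :\ b -> False.
  move=> H zC; rewrite !inE => /andP [zb zB]; by rewrite (in1 H zC zB) eqxx in zb.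
have eb' : e \in b'.
  have := Cm; move/forall_inP/(_ _ Hb')/meetP => [z zC zb'].
  move: (subsetP b'J _ zb'); rewrite inE => /orP [zJ|zb]; first by case: (notJ _ _ HC zC zJ).
  by rewrite -(zb2 _ zC zb).
have Eb' : b' = (B1 :\ b) :|: [set e].
  apply/eqP; rewrite eq_sym eqEcard; apply/andP; split.
    by rewrite subUset Jb' sub1set eb'.
  rewrite (eq_card_bases M Hb' HB1) setUC cardsU1 !inE negb_and eB1 orbT add1n.
  have : b \in C :&: B1 by rewrite HC inE.
  rewrite inE => /andP [_ bB]; by rewrite [in X in X <= _](cardsD1 b B1) bB add1n ltnSn.
have := C'm; move/forall_inP/(_ _ Hb')/meetP => [w wC wb'].
move: wb'; rewrite Eb' inE => /orP [wJ|]; first by case: (notJ _ _ HC' wC wJ).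
by rewrite inE => /eqP <-.
Qed.

End Aux3.

Theorem mainTheorem9 (T : finType) (E : {set T}) (B : {set {set T}})
  (k r : nat) :
  is_matroid E B ->
  lambda_eq E B k -> sigma_eq B k ->
  mrank B = r ->
  mrank (crux_bases E B k) + #|min_cocircuits E B k| = r.
Proof.
move=> M [[C0 HC0 HC0k] _] [[f Hf] _] Hr.
have [ME Bn0 _] := M.
have [b00 b00B] : exists b, b \in B by apply/set0Pn.
have k0 : 0 < k.
  rewrite -HC0k card_gt0; apply/set0Pn.
  have [/andP [_ H] _] := minsetP HC0.
  by have [z zC _] := meetP (forall_inP H _ b00B); exists z.
pose i0 : 'I_k := Ordinal k0.
set B1 := f i0.
have HB1 : B1 \in B by apply: Hf.1.
set mc := min_cocircuits E B k.
set X := \bigcup_(C in mc) C.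
have Hone C : C \in mc -> exists b, C :&: B1 = [set b].
  rewrite inE => /andP [Hc /eqP Ck].
  have [/andP [_ H] _] := minsetP Hc.
  have [z zC zB] := meetP (forall_inP H _ HB1).
  exists z; apply/setP => w; rewrite inE; apply/idP/idP.
    move=> Hw; apply/eqP; apply: (single_meet Hf Ck (fun b Hb => forall_inP H b Hb) Hw).
    by rewrite inE zC zB.
  by move/eqP ->; rewrite inE zC zB.
pose phi (C : {set T}) := [pick x in C :&: B1].
have Hphi C b : C :&: B1 = [set b] -> phi C = Some b.
  move=> HC; rewrite /phi; case: pickP => [x|H].
    by rewrite HC inE => /eqP ->.
  by move: (H b); rewrite HC inE eqxx.
have mccoc C : C \in mc -> cocircuit E B C by rewrite inE => /andP [].
have HBX : #|B1 :&: X| = #|mc|.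
  rewrite -(card_imset _ Some_inj) -(card_in_imset (f := phi)).
    apply: eq_card => o; apply/idP/idP.
      case/imsetP => x; rewrite inE => /andP [xB /bigcupP [C HC xC]] ->.
      have [b Hb] := Hone C HC.
      have xb := in1 Hb xC xB.
      by apply/imsetP; exists C => //; rewrite (Hphi _ _ Hb) xb.
    case/imsetP => C HC ->.
    have [b Hb] := Hone C HC.
    have : b \in C :&: B1 by rewrite Hb inE.
    rewrite inE => /andP [bC bB].
    rewrite (Hphi _ _ Hb); apply/imsetP; exists b => //.
    by rewrite inE bB; apply/bigcupP; exists C.
  move=> C C' HC HC'.
  have [b Hb] := Hone C HC; have [b' Hb'] := Hone C' HC'.
  rewrite (Hphi _ _ Hb) (Hphi _ _ Hb') => [[eb]]; subst b'.
  apply/eqP; rewrite eqEsubset.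
  by rewrite (coc_sub M HB1 (mccoc _ HC) (mccoc _ HC') Hb Hb')
             (coc_sub M HB1 (mccoc _ HC') (mccoc _ HC) Hb' Hb).
have Hr1 : #|B1| = r.
  rewrite -Hr /mrank; apply/eqP; rewrite eqn_leq; apply/andP; split.
    by apply: leq_bigmax_cond.
  by apply/bigmax_leqP => b Hb; rewrite (eq_card_bases M Hb HB1).
have Hup I : I \in crux_bases E B k -> #|I| + #|B1 :&: X| <= r.
  rewrite inE => /maxsetp /andP [/exists_inP [b0 Hb0 Ib0] IEX].
  have [b' Hb' /andP [Ib' b'I]] := between M Hb0 Ib0 HB1.
  have sub : B1 :&: X \subset b'.
    apply/subsetP => x; rewrite inE => /andP [xB /bigcupP [C HC xC]].
    have [b Hb] := Hone C HC.
    have xb := in1 Hb xC xB; subst x.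
    have [/andP [_ H] _] := minsetP (mccoc _ HC).
    have [z zC zb'] := meetP (forall_inP H _ Hb').
    move: (subsetP b'I _ zb'); rewrite inE => /orP [zI|zB].
      have : z \in E :\: X by apply: (subsetP IEX).
      by rewrite inE => /andP [/negP []]; apply/bigcupP; exists C.
    by rewrite -(in1 Hb zC zB).
  have : #|I :|: (B1 :&: X)| <= r.
    rewrite -Hr1 -(eq_card_bases M Hb' HB1); apply: subset_leq_card.
    by rewrite subUset Ib' sub.
  have -> : #|I :|: (B1 :&: X)| = #|I| + #|B1 :&: X|.
    rewrite cardsU.
    have -> : I :&: (B1 :&: X) = set0.
      apply/setP => x; rewrite !inE; apply/negP => /and3P [xI _ xX].
      by move: (subsetP IEX _ xI); rewrite inE xX.
    by rewrite cards0 subn0.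
  by [].
have [I HI HI0] : exists2 I, I \in crux_bases E B k & r - #|B1 :&: X| <= #|I|.
  have P0 : indep B (B1 :\: X) && (B1 :\: X \subset E :\: X).
    apply/andP; split; first by apply/exists_inP; exists B1 => //; apply: subsetDl.
    by apply: setSD; apply: ME.
  have [I HI sub] := maxset_exists (P := fun J : {set T} => indep B J && (J \subset E :\: X)) P0.
  exists I; first by rewrite inE.
  by rewrite -Hr1 -cardsD; apply: subset_leq_card.
have Hm : #|B1 :&: X| <= r by rewrite -Hr1; apply: subset_leq_card; apply: subsetIl.
have H1 : mrank (crux_bases E B k) <= r - #|B1 :&: X|.
  apply/bigmax_leqP => J HJ; have := Hup J HJ; lia.
have H2 : #|I| <= mrank (crux_bases E B k).
  by apply: leq_bigmax_cond.
rewrite -HBX; lia.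
Qed.
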